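(* Let $q > p+1$ and let $(a_0,\dots,a_q)$ and $(b_0,\dots,b_p)$ be appropriate sequences. Let $u, v$ be non-negative integers with $u < v$ and $u + v \leq q - p$. Then $$\sum_{0 \leq i \leq p} a_{i+u} b_i \leq \sum_{0 \leq i \leq p} a_{i+v} b_i.$$
   Context: A real sequence $(c_0,c_1,\dots,c_m)$ is called appropriate if $c_i = c_{m-i}$ for $0 \le i < m/2$ and $0 \leq c_0 \leq c_1 \leq \dots \leq c_{\lfloor m/2\rfloor}$. *)

(* Defs.v *)
From mathcomp Require Import all_boot all_order all_algebra.
Set Implicit Arguments. Unset Strict Implicit. Unset Printing Implicit Defensive.
Import Order.TTheory GRing.Theory Num.Theory.
Local Open Scope ring_scope.

(* A real sequence (c_0,...,c_m) is represented by c : nat -> R, only indices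
   0..m being relevant. *)
Definition appropriate (R : realFieldType) (m : nat) (c : nat -> R) : Prop :=
  (forall i : nat, (i.*2 < m)%N -> c i = c (m - i)%N) /\
  0 <= c 0%N /\
  (forall i : nat, (i < m./2)%N -> c i <= c i.+1).

(* Main.v *)
Require Import Defs.
From mathcomp Require Import all_boot all_order all_algebra.
From mathcomp Require Import zify ring lra.
Import Order.TTheory GRing.Theory Num.Theory.
Local Open Scope ring_scope.

Lemma app_sym (R : realFieldType) m (c : nat -> R) :
  appropriate m c -> forall i, (i <= m)%N -> c i = c (m - i)%N.
Proof.
case=> hs [_ _] i him.
have [h|h|h] := ltngtP (i.*2) m.
- exact: hs.
- rewrite (hs (m - i)%N) ?subKn //; lia.
- have -> : (m - i)%N = i by lia. by [].
Qed.

Lemma app_mono (R : realFieldType) m (c : nat -> R) :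
  appropriate m c -> forall i k, (i <= k)%N -> (k <= m./2)%N -> c i <= c k.
Proof.
case=> _ [_ hm] i k; elim: k => [|k IH] hik hk.
- by have -> : i = 0%N by lia.
- have [->|hlt] := eqVneq i k.+1; first by [].
  apply: le_trans (hm k _); last lia.
  apply: IH; lia.
Qed.

Lemma alem (R : realFieldType) q (a : nat -> R) :
  appropriate q a -> forall j1 j2, (j1 <= j2)%N -> (j1 + j2 <= q)%N -> a j1 <= a j2.
Proof.
move=> ha j1 j2 h12 hq.
have [hj|hj] := leqP j2 q./2.
- exact: app_mono ha _ _ h12 hj.
- rewrite (@app_sym _ _ _ ha j2); last lia.
  apply: app_mono ha _ _ _ _; lia.
Qed.

Lemma app_shift (R : realFieldType) p (b : nat -> R) :
  appropriate p.+2 b -> appropriate p (fun i => b i.+1 - b 0%N).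
Proof.
move=> hb; have hs := @app_sym _ _ _ hb; case: hb => _ [_ hm]; split; [|split].
- move=> i hi /=; rewrite (hs i.+1); last lia.
  by have -> : (p.+2 - i.+1 = (p - i).+1)%N by lia.
- rewrite subr_ge0; apply: hm; rewrite /=; lia.
- move=> i hi /=; rewrite lerD2r; apply: hm; move: hi => /=; lia.
Qed.

Lemma key (R : realFieldType) q (a : nat -> R) : appropriate q a ->
  forall p (b : nat -> R) s, appropriate p b -> (p + s.*2 < q)%N ->
  0 <= \sum_(0 <= i < p.+1) (a (i + s)%N.+1 - a (i + s)%N) * b i.
Proof.
move=> ha; elim/ltn_ind => p IH b s hb hps.
have b0 : 0 <= b 0%N by case: hb => _ [].
have -> : \sum_(0 <= i < p.+1) (a (i + s)%N.+1 - a (i + s)%N) * b i =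
  (\sum_(0 <= i < p.+1) (a (i + s)%N.+1 - a (i + s)%N)) * b 0%N +
  \sum_(0 <= i < p.+1) (a (i + s)%N.+1 - a (i + s)%N) * (b i - b 0%N).
  by rewrite mulr_suml -big_split /=; apply: eq_bigr => i _; ring.
have -> : \sum_(0 <= i < p.+1) (a (i + s)%N.+1 - a (i + s)%N) = a (p.+1 + s)%N - a (0 + s)%N.
  by rewrite -(@telescope_sumr _ 0 p.+1 (fun i => a (i + s)%N)).
apply: addr_ge0.
  apply: mulr_ge0 => //; rewrite subr_ge0; apply: (@alem _ _ _ ha); lia.
case: p IH hb hps => [|[|p]] IH hb hps.
- by rewrite big_nat1 subrr mulr0.
- rewrite big_nat_recr //= big_nat1 subrr mulr0 add0r.
  by rewrite -(@app_sym _ _ _ hb 0%N) // subrr mulr0.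
- rewrite big_nat_recl // big_nat_recr //= subrr mulr0 add0r.
  rewrite -(@app_sym _ _ _ hb 0%N) // subrr mulr0 addr0.
  have := IH p _ (fun i => b i.+1 - b 0%N) s.+1 (@app_shift _ _ _ hb).
  rewrite ltnS => /(_ (leqW (leqnn p))).
  have hh : (p + s.+1.*2 < q)%N by move: hps; rewrite doubleS; lia.
  move=> /(_ hh) H; apply: le_trans H _; rewrite le_eqVlt; apply/orP; left; apply/eqP.
  by apply: eq_bigr => i _ /=; have -> : (i + s.+1 = i.+1 + s)%N by lia.
Qed.

Theorem lemma3p4 (R : realFieldType) (p q : nat) (a b : nat -> R) (u v : nat) :
  (p.+1 < q)%N ->
  appropriate q a -> appropriate p b ->
  (u < v)%N -> (u + v <= q - p)%N ->
  \sum_(0 <= i < p.+1) a (i + u)%N * b i <= \sum_(0 <= i < p.+1) a (i + v)%N * b i.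
Proof.
move=> hpq ha hb huv hsum.
pose S s := \sum_(0 <= i < p.+1) a (i + s)%N * b i.
have step : forall s, (s.*2 < q - p)%N -> S s <= S s.+1.
  move=> s hs; rewrite -subr_ge0.
  have -> : S s.+1 - S s = \sum_(0 <= i < p.+1) (a (i + s)%N.+1 - a (i + s)%N) * b i.
    by rewrite /S -sumrB; apply: eq_bigr => i _; rewrite addnS mulrBl.
  exact: (@key _ _ _ ha p b s hb ltac:(lia)).
have chain : forall s k, ((s + k).*2 <= (q - p).+1)%N -> S s <= S (s + k)%N.
  move=> s; elim=> [|k IH] hk; first by rewrite addn0.
  apply: le_trans (IH ltac:(lia)) _; rewrite addnS; apply: step; lia.
have sym : forall s, (s <= q - p)%N -> S s = S (q - p - s)%N.
  move=> s hs; rewrite /S big_nat_rev /=; apply: eq_big_nat => i /andP[_ hi].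
  rewrite add0n (@app_sym _ _ _ hb (p.+1 - i.+1)%N); last lia.
  rewrite (@app_sym _ _ _ ha (p.+1 - i.+1 + s)%N); last lia.
  have -> : (p - (p.+1 - i.+1) = i)%N by lia.
  by have -> : (q - (p.+1 - i.+1 + s) = i + (q - p - s))%N by lia.
have [hv|hv] := leqP (v.*2) (q - p).+1.
- have -> : v = (u + (v - u))%N by lia.
  apply: chain; lia.
- rewrite -/(S u) -/(S v) (sym v); last lia.
  have -> : (q - p - v = u + (q - p - v - u))%N by lia.
  apply: chain; lia.
Qed.
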